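(* Let $G$ be a nontrivial finite group, $1\ne g\in G$, and $S=\mathscr M(G,2,2,C)$ with $C=\begin{bmatrix}1&1\\1&g\end{bmatrix}$. Then both the minimal degree of a faithful action of $S$ by partial transformations and by total transformations equal $\min\{2\deg(\rho)-|\mathrm{Fix}(\rho(g))|\}$, as $\rho$ runs over all faithful permutation representations of $G$ (equivalently, all faithful permutation representations with no two isomorphic orbits).
   Context: The Rees matrix semigroup $\mathscr M(G,2,2,C)$ is $\{1,2\}\times G\times\{1,2\}$ with $(i,h,j)(k,h',l)=(i,hC_{jk}h',l)$. The minimal degree of a faithful action by partial (resp. total) transformations is the least $m$ such that $S$ embeds in the monoid of partial (resp. total) maps of an $m$-set acting on the right. $\deg(\rho)$ is the number of points permuted and $\mathrm{Fix}(\rho(g))$ the set of fixed points of $\rho(g)$. *)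

(* Defs.v *)
From mathcomp Require Import all_boot all_fingroup.
Set Implicit Arguments. Unset Strict Implicit. Unset Printing Implicit Defensive.
Import GroupScope.

(* The group G is the whole finGroupType gT. *)
(* Indices {1,2} are modelled by 'I_2 : index "1" = ord0, index "2" = ord_max. *)
Definition RM (gT : finGroupType) := ('I_2 * gT * 'I_2)%type.

Definition sandwich (gT : finGroupType) (g : gT) (j k : 'I_2) : gT :=
  if (j == ord_max) && (k == ord_max) then g else 1.

Definition rm_mul (gT : finGroupType) (g : gT) (s t : RM gT) : RM gT :=
  let: (i, h, j) := s in let: (k, h', l) := t in (i, h * sandwich g j k * h', l).

(* Faithful action by partial transformations of an m-set, acting on the right:
   an injective semigroup homomorphism into the partial transformation monoid,
   x.(st) = (x.s).t *)
Definition faithful_partial_action (gT : finGroupType) (g : gT) (m : nat)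
  (phi : RM gT -> 'I_m -> option 'I_m) : Prop :=
  (forall s t x, phi (rm_mul g s t) x = obind (phi t) (phi s x)) /\
  (forall s t, (forall x, phi s x = phi t x) -> s = t).

Definition faithful_total_action (gT : finGroupType) (g : gT) (m : nat)
  (phi : RM gT -> 'I_m -> 'I_m) : Prop :=
  (forall s t x, phi (rm_mul g s t) x = phi t (phi s x)) /\
  (forall s t, (forall x, phi s x = phi t x) -> s = t).

Definition has_partial_degree (gT : finGroupType) (g : gT) (m : nat) : Prop :=
  exists phi, @faithful_partial_action gT g m phi.

Definition has_total_degree (gT : finGroupType) (g : gT) (m : nat) : Prop :=
  exists phi, @faithful_total_action gT g m phi.

Definition is_least (P : nat -> Prop) (d : nat) : Prop :=
  P d /\ forall m, P m -> d <= m.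

Definition faithful_perm_rep (gT : finGroupType) (n : nat)
  (rho : gT -> {perm 'I_n}) : Prop :=
  {morph rho : x y / x * y} /\ injective rho.

Definition fixpts (n : nat) (p : {perm 'I_n}) : {set 'I_n} := [set x | p x == x].

Definition rep_orbit (gT : finGroupType) (n : nat) (rho : gT -> {perm 'I_n})
  (x : 'I_n) : {set 'I_n} := [set rho h x | h : gT].

Definition iso_orbits (gT : finGroupType) (n : nat) (rho : gT -> {perm 'I_n})
  (x y : 'I_n) : Prop :=
  exists f : 'I_n -> 'I_n,
    [/\ {in rep_orbit rho x, forall z, f z \in rep_orbit rho y},
        {in rep_orbit rho x &, injective f},
        {in rep_orbit rho y, forall w, exists2 z, z \in rep_orbit rho x & f z = w}
      & {in rep_orbit rho x, forall z h, f (rho h z) = rho h (f z)}].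

Definition no_iso_orbits (gT : finGroupType) (n : nat) (rho : gT -> {perm 'I_n}) : Prop :=
  forall x y, rep_orbit rho x != rep_orbit rho y -> ~ iso_orbits rho x y.

Definition rep_value (gT : finGroupType) (g : gT) (d : nat) : Prop :=
  exists n (rho : gT -> {perm 'I_n}),
    faithful_perm_rep rho /\ d = 2 * n - #|fixpts (rho g)|.

Definition rep_value_noiso (gT : finGroupType) (g : gT) (d : nat) : Prop :=
  exists n (rho : gT -> {perm 'I_n}),
    [/\ faithful_perm_rep rho, no_iso_orbits rho & d = 2 * n - #|fixpts (rho g)|].

(* Main.v *)
Require Import Defs.
From mathcomp Require Import all_boot all_fingroup.
From mathcomp Require Import zify.
From Stdlib Require Import Classical.
Set Implicit Arguments. Unset Strict Implicit. Unset Printing Implicit Defensive.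
Import GroupScope.

Lemma rmE (gT : finGroupType) (g : gT) i h j k h' l :
  rm_mul g (i,h,j) (k,h',l) = (i, h * sandwich g j k * h', l).
Proof. by []. Qed.

Lemma sw0x (gT : finGroupType) (g : gT) k : sandwich g ord0 k = 1.
Proof. by []. Qed.
Lemma sw10 (gT : finGroupType) (g : gT) : sandwich g ord_max ord0 = 1.
Proof. by []. Qed.
Lemma sw11 (gT : finGroupType) (g : gT) : sandwich g ord_max ord_max = g.
Proof. by []. Qed.
Lemma sw1g (gT : finGroupType) (g : gT) k i : sandwich g k i = 1 \/ sandwich g k i = g.
Proof. by rewrite /sandwich; case: ifP; auto. Qed.

Lemma ord2 (k : 'I_2) : k = ord0 \/ k = ord_max.
Proof. by case: k => [[|[|]]] // Hk; [left|right]; apply: val_inj. Qed.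

Lemma least_exists (P : nat -> Prop) n : P n -> exists d, is_least P d.
Proof.
elim/ltn_ind: n => n IH Pn.
case: (classic (exists m, m < n /\ P m)) => [[m [lt Pm]]|H].
  exact: IH lt Pm.
exists n; split=> // m Pm; rewrite leqNgt; apply/negP => lt; apply: H; by exists m.
Qed.

Lemma total_transfer (gT : finGroupType) (g : gT) (T : finType) (psi : RM gT -> T -> T) :
  (forall s t x, psi (rm_mul g s t) x = psi t (psi s x)) ->
  (forall s t, (forall x, psi s x = psi t x) -> s = t) ->
  has_total_degree g #|T|.
Proof.
move=> hom inj.
exists (fun s i => enum_rank (psi s (enum_val i))); split.
  by move=> s t i; rewrite hom enum_rankK.
move=> s t H; apply: inj => x.
by have := H (enum_rank x); rewrite enum_rankK => /enum_rank_inj.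
Qed.

Lemma total_partial (gT : finGroupType) (g : gT) m :
  has_total_degree g m -> has_partial_degree g m.
Proof.
case=> phi [hom inj]; exists (fun s x => Some (phi s x)); split.
  by move=> s t x; rewrite hom.
by move=> s t H; apply: inj => x; case: (H x).
Qed.

Lemma rep_transfer (gT : finGroupType) (g : gT) (T : finType) (rho : gT -> {perm T}) :
  {morph rho : x y / x * y} -> injective rho ->
  rep_value g (2 * #|T| - #|[set x | rho g x == x]|).
Proof.
move=> hom inj.
pose f h := fun i : 'I_#|T| => enum_rank (rho h (enum_val i)).
have finj h : injective (f h).
  by move=> i j /enum_rank_inj /perm_inj /enum_val_inj.
exists #|T|, (fun h => perm (finj h)); split; last first.
  congr (_ - _); rewrite -(card_imset _ (@enum_rank_inj T)).
  apply: eq_card => i; rewrite /fixpts !inE permE /f.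
  apply/imsetP/eqP => [[x Hx ->]|E]; last first.
    exists (enum_val i); last by rewrite enum_valK.
    by rewrite inE -{2}E enum_rankK.
  by rewrite enum_rankK; rewrite inE in Hx; rewrite (eqP Hx).
split.
  move=> h h'; apply/permP => i; rewrite permM !permE /f hom permM enum_rankK //.
move=> h h' E; apply: inj; apply/permP => x.
have := congr1 (fun p : {perm 'I_#|T|} => p (enum_rank x)) E; rewrite /= !permE /f enum_rankK.
by move/enum_rank_inj.
Qed.

Lemma regular_rep (gT : finGroupType) (g : gT) : exists v, rep_value g v.
Proof.
have inj h : injective (fun x : gT => x * h) by apply: mulIg.
eexists; apply: (@rep_transfer gT g gT (fun h => perm (inj h))).
  by move=> h h'; apply/permP => x; rewrite permM !permE /= mulgA.
move=> h h' E; have := congr1 (fun p : {perm gT} => p 1) E; rewrite !permE /= !mul1g //.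
Qed.

Lemma lower_bound (gT : finGroupType) (g : gT) m :
  has_partial_degree g m -> exists2 v, rep_value g v & v <= m.
Proof.
case=> phi [hom finj].
pose Z1 := fun x => phi (ord0, 1, ord0) x == Some x.
pose Z2 := fun x => phi (ord_max, g^-1, ord_max) x == Some x.
have ZL : forall z h, Z1 z -> exists w, phi (ord0,h,ord0) z = Some w /\ Z1 w.
  move=> z h /eqP Hz.
  have := hom (ord0,h,ord0) (ord0,h^-1,ord0) z.
  rewrite rmE sw0x mulg1 mulgV Hz.
  case E: (phi (ord0,h,ord0) z) => [w|] /= Hw //.
  exists w; split=> //; apply/eqP.
  have := hom (ord0,h,ord0) (ord0,1,ord0) z; rewrite rmE sw0x !mulg1 E /=.
  by move=> <-.
have AL : forall z, Z1 z -> exists w, [/\ phi (ord0,1,ord_max) z = Some w,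
    phi (ord_max,g^-1,ord0) w = Some z & Z2 w].
  move=> z /eqP Hz.
  have := hom (ord0,1,ord_max) (ord_max,g^-1,ord0) z; rewrite rmE sw11 mul1g mulgV Hz.
  case E: (phi (ord0,1,ord_max) z) => [w|] /= Hw //.
  exists w; split=> //; apply/eqP.
  have := hom (ord0,1,ord_max) (ord_max,g^-1,ord_max) z; rewrite rmE sw11 mul1g mulgV E /=.
  by move=> <-.
have FX : forall z, Z1 z -> Z2 z -> phi (ord0,g,ord0) z = Some z.
  move=> z /eqP H1 /eqP H2.
  have H3 : phi (ord0,g^-1,ord_max) z = Some z.
    have := hom (ord0,1,ord0) (ord_max,g^-1,ord_max) z.
    by rewrite rmE sw0x !mul1g H1 /= H2.
  have H4 : phi (ord_max,1,ord0) z = Some z.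
    have := hom (ord0,g^-1,ord_max) (ord_max,1,ord0) z.
    by rewrite rmE sw11 mulg1 mulVg H1 H3 /= => <-.
  have H5 : phi (ord0,1,ord_max) z = Some z.
    have := hom (ord_max,g^-1,ord_max) (ord0,1,ord_max) z.
    by rewrite rmE sw10 !mulg1 H2 /= => <-.
  have := hom (ord0,1,ord_max) (ord_max,1,ord0) z.
  by rewrite rmE sw11 mulg1 mul1g H5 /= H4.
pose T : finType := {x : 'I_m | Z1 x}.
pose rhoF h (z : T) : T := insubd z (odflt (val z) (phi (ord0,h,ord0) (val z))).
have rhoFE : forall h z, phi (ord0,h,ord0) (val z) = Some (val (rhoF h z)).
  move=> h z; have [w [Ew Zw]] := ZL (val z) h (valP z).
  by rewrite /rhoF Ew /= insubdK.
have rhoFK : forall h, cancel (rhoF h) (rhoF h^-1).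
  move=> h z; apply: val_inj.
  have := hom (ord0,h,ord0) (ord0,h^-1,ord0) (val z).
  rewrite rmE sw0x mulg1 mulgV (eqP (valP z)) rhoFE /= rhoFE.
  by case=> ->.
have rinj h : injective (rhoF h) := can_inj (rhoFK h).
pose rho h : {perm T} := perm (rinj h).
have Rv := @rep_transfer gT g T rho.
have Hm : {morph rho : x y / x * y}.
  move=> h h'; apply/permP => z; rewrite permM !permE; apply: val_inj.
  have := hom (ord0,h,ord0) (ord0,h',ord0) (val z).
  rewrite rmE sw0x mulg1 !rhoFE /= rhoFE.
  by case=> ->.
have Hi : injective rho.
  move=> h h' E.
  have Eq : forall z, rhoF h z = rhoF h' z.
    by move=> z; have := congr1 (fun p : {perm _} => p z) E; rewrite /= !permE.
  have : (ord0,h,ord0) = (ord0,h',ord0) :> RM gT.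
    apply: finj => x.
    have := hom (ord0,1,ord0) (ord0,h,ord0) x; rewrite rmE sw0x !mul1g => ->.
    have := hom (ord0,1,ord0) (ord0,h',ord0) x; rewrite rmE sw0x !mul1g => ->.
    case Ex: (phi (ord0,1,ord0) x) => [z|] //=.
    have Zz : Z1 z.
      apply/eqP; have := hom (ord0,1,ord0) (ord0,1,ord0) x.
      by rewrite rmE sw0x !mulg1 Ex /= => <-.
    by rewrite -[z]/(val (exist _ z Zz : T)) !rhoFE Eq.
  by case=> ->.
exists (2 * #|T| - #|[set z | rho g z == z]|); first exact: Rv.
pose A := [set x | Z1 x]. pose B := [set x | Z2 x].
pose alpha (z : T) := odflt (val z) (phi (ord0,1,ord_max) (val z)).
have alphaE : forall z : T, phi (ord_max,g^-1,ord0) (alpha z) = Some (val z) /\ Z2 (alpha z).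
  move=> z; have [w [E1 E2 E3]] := AL (val z) (valP z).
  by rewrite /alpha E1.
have ainj : injective alpha.
  move=> z1 z2 E; apply: val_inj.
  have [e1 _] := alphaE z1; have [e2 _] := alphaE z2.
  by move: e1; rewrite E e2; case.
have c1 : #|T| <= #|A|.
  rewrite -cardsT -(card_imset _ val_inj); apply: subset_leq_card.
  by apply/subsetP => x /imsetP [z _ ->]; rewrite inE; exact: (valP z).
have c2 : #|T| <= #|B|.
  rewrite -cardsT -(card_imset _ ainj); apply: subset_leq_card.
  by apply/subsetP => x /imsetP [z _ ->]; rewrite inE; case: (alphaE z).
have c3 : #|A :&: B| <= #|[set z : T | rho g z == z]|.
  rewrite -(card_imset _ val_inj); apply: subset_leq_card.
  apply/subsetP => x; rewrite !inE => /andP [h1 h2].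
  apply/imsetP; exists (exist _ x h1) => //; rewrite inE permE; apply/eqP/val_inj => /=.
  by have := rhoFE g (exist _ x h1); rewrite /= FX //; case.
have c4 : #|A :|: B| <= m by apply: leq_trans (max_card _) _; rewrite card_ord.
have c5 := cardsUI A B.
lia.
Qed.

Lemma rho1 (gT : finGroupType) (T : finType) (rho : gT -> {perm T}) :
  {morph rho : x y / x * y} -> rho 1 = 1.
Proof. by move=> hom; apply: (mulgI (rho 1)); rewrite -hom !mulg1. Qed.

Lemma upper_bound (gT : finGroupType) (g : gT) (hg : g != 1) n (rho : gT -> {perm 'I_n}) :
  faithful_perm_rep rho -> has_total_degree g (2 * n - #|fixpts (rho g)|).
Proof.
move=> [hom inj].
pose F := fixpts (rho g).
pose T : finType := ('I_n + {x : 'I_n | x \notin F})%type.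
have cardT : #|T| = 2 * n - #|F|.
  rewrite card_sum card_sig card_ord.
  have -> : #|[pred x | x \notin F]| = #|~: F| by apply: eq_card => x; rewrite !inE.
  have := cardsC F; rewrite card_ord.
  have := max_card F; rewrite card_ord. lia.
pose emb (p : T) : 'I_2 * 'I_n :=
  match p with inl w => (ord0, w) | inr w => (ord_max, val w) end.
pose mk (q : 'I_2 * 'I_n) : T :=
  if insub q.2 is Some w then (if q.1 == ord_max then inr w else inl q.2) else inl q.2.
pose nrm (q : 'I_2 * 'I_n) := (if q.2 \in F then ord0 else q.1, q.2).
have embmk q : emb (mk q) = nrm q.
  case: q => k w; rewrite /mk /nrm /=; case: insubP => [u Hu Eu|Hu] /=.
    rewrite (negbTE Hu); case: eqP => [->|Hk] /=; first by rewrite Eu.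
    by case: (ord2 k) Hk => // ->.
  by rewrite (negbNE Hu).
pose act0 (s : RM gT) (q : 'I_2 * 'I_n) : 'I_2 * 'I_n :=
  let: (i,h,j) := s in (j, rho (sandwich g q.1 i * h) q.2).
have fixF : forall c h w, (c = 1 \/ c = g) -> w \in F -> rho (c * h) w = rho h w.
  move=> c h w [->|->] Hw; first by rewrite mul1g.
  by rewrite hom permM; rewrite inE in Hw; rewrite (eqP Hw).
have act0_nrm : forall s q, act0 s (nrm q) = act0 s q.
  move=> [[i h] j] [k w]; rewrite /nrm /act0 /=; case: ifP => // HF.
  by rewrite sw0x mul1g fixF //; apply: sw1g.
have act0_mul : forall s t q, act0 (rm_mul g s t) q = act0 t (act0 s q).
  move=> [[i h] j] [[i' h'] j'] [k w]; rewrite rmE /act0 /=.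
  by rewrite -permM -hom !mulgA.
pose act s p := mk (act0 s (emb p)).
rewrite -cardT; apply: (@total_transfer gT g T act).
  by move=> s t p; rewrite /act act0_mul embmk act0_nrm.
move=> [[i h] j] [[i' h'] j'] E.
have Eq : forall p, nrm (act0 (i,h,j) (emb p)) = nrm (act0 (i',h',j') (emb p)).
  by move=> p; rewrite -!embmk; congr emb; apply: E.
have eh : h = h'.
  apply: inj; apply/permP => w.
  by have := congr1 snd (Eq (inl w)); rewrite /= !sw0x !mul1g.
subst h'.
have [w0 Hw0] : exists w0, w0 \notin F.
  case: (pickP (fun w => w \notin F)) => [w0 Hw0 | H0]; first by exists w0.
  have : rho g = rho 1.
    apply/permP => w; have := H0 w; rewrite /= inE => /negbFE /eqP ->.
    by rewrite rho1 // perm1.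
  by move/inj => g1; rewrite g1 eqxx in hg.
have ej : j = j'.
  have := congr1 fst (Eq (inl (rho h^-1 w0))).
  by rewrite /= !sw0x !mul1g -permM -hom mulVg rho1 // perm1 (negbTE Hw0).
subst j'.
have ei : i = i'.
  have := congr1 snd (Eq (inr (exist _ w0 Hw0))); rewrite /=.
  have key : rho (g * h) w0 <> rho h w0.
    rewrite hom permM => /perm_inj E0; move: Hw0; rewrite inE E0 eqxx //.
  case: (ord2 i) => ->; case: (ord2 i') => -> //; rewrite sw10 sw11 mul1g => E0.
    by case: key.
  by case: key.
by rewrite ei.
Qed.

Lemma remove_orbit (gT : finGroupType) (g : gT) n (rho : gT -> {perm 'I_n}) x y :
  faithful_perm_rep rho -> rep_orbit rho x != rep_orbit rho y -> iso_orbits rho x y ->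
  exists2 v, rep_value g v & v < 2 * n - #|fixpts (rho g)|.
Proof.
move=> [hom inj] neq [f [_ _ fsurj feq]].
have r1 := rho1 hom.
have memO : forall w z, reflect (exists h, w = rho h z) (w \in rep_orbit rho z).
  move=> w z; apply: (iffP imsetP) => [[h _ ->]|[h ->]]; by exists h.
have clo : forall w z h, w \in rep_orbit rho z -> rho h w \in rep_orbit rho z.
  move=> w z h /memO [k ->]; apply/memO; exists (k * h); by rewrite hom permM.
have cloV : forall w z h, rho h w \in rep_orbit rho z -> w \in rep_orbit rho z.
  move=> w z h /(clo _ _ h^-1); by rewrite -permM -hom mulgV r1 perm1.
have selfO : forall z, z \in rep_orbit rho z.
  by move=> z; apply/memO; exists 1; rewrite r1 perm1.
have Osub : forall z a, z \in rep_orbit rho a -> rep_orbit rho z \subset rep_orbit rho a.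
  move=> z a Hz; apply/subsetP => w /memO [k ->]; exact: clo.
have Oeq : forall z a, z \in rep_orbit rho a -> rep_orbit rho z = rep_orbit rho a.
  move=> z a Hz; apply/eqP; rewrite eqEsubset Osub //=; apply: Osub.
  case/memO: Hz => h Eh; apply: (cloV _ _ h); rewrite -Eh; exact: selfO.
have disj : forall z, z \in rep_orbit rho x -> z \notin rep_orbit rho y.
  move=> z Hx; apply/negP => Hy; move/negP: neq; apply.
  by rewrite -(Oeq _ _ Hx) (Oeq _ _ Hy).
pose O := rep_orbit rho y.
pose T : finType := {w : 'I_n | w \notin O}.
have inv : forall h (z : T), rho h (val z) \notin O.
  move=> h z; apply/negP => /cloV H; by move: (valP z); rewrite /= H.
pose rR h (z : T) : T := insubd z (rho h (val z)).
have rRE : forall h z, val (rR h z) = rho h (val z).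
  by move=> h z; rewrite /rR insubdK //; apply: inv.
have rinj h : injective (rR h).
  by move=> z1 z2 E; apply: val_inj; apply: (@perm_inj _ (rho h)); rewrite -!rRE E.
pose r h : {perm T} := perm (rinj h).
have Hm : {morph r : a b / a * b}.
  by move=> h h'; apply/permP => z; rewrite permM !permE; apply: val_inj; rewrite !rRE hom permM.
have Hi : injective r.
  move=> h h' E; apply: inj; apply/permP => w.
  have Eq : forall z : T, rho h (val z) = rho h' (val z).
    by move=> z; rewrite -!rRE; have := congr1 (fun p : {perm T} => p z) E; rewrite /= !permE => ->.
  case: (boolP (w \in O)) => Hw; last by have := Eq (exist _ w Hw).
  have [z Hz <-] := fsurj w Hw.
  rewrite -(feq z Hz h) -(feq z Hz h').
  by have /= -> := Eq (exist _ z (disj _ Hz)).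
exists (2 * #|T| - #|[set z | r g z == z]|); first exact: rep_transfer.
pose F := fixpts (rho g).
have cT : #|T| + #|O| = n.
  rewrite card_sig.
  have -> : #|[pred x | x \notin O]| = #|~: O| by apply: eq_card => w; rewrite !inE.
  by rewrite addnC cardsC card_ord.
have cF : #|F :\: O| <= #|[set z | r g z == z]|.
  rewrite -(card_imset _ val_inj); apply: subset_leq_card.
  apply/subsetP => w; rewrite !inE => /andP [h1 h2].
  apply/imsetP; exists (exist _ w h1) => //; rewrite inE permE; apply/eqP/val_inj.
  by rewrite rRE /=; apply/eqP.
have cI : #|F :&: O| <= #|O| by apply: subset_leq_card; apply: subsetIr.
have cD := cardsID O F.
have cO : 0 < #|O| by apply/card_gt0P; exists y; apply: selfO.
have cFn : #|F| <= n by apply: leq_trans (max_card _) _; rewrite card_ord.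
rewrite -/F; lia.
Qed.

Theorem corollary2p17 (gT : finGroupType) (g : gT) (hg : g != 1) :
  exists d : nat,
    [/\ is_least (rep_value g) d,
        is_least (rep_value_noiso g) d,
        is_least (has_partial_degree g) d
      & is_least (has_total_degree g) d].
Proof.
have [v0 Hv0] := regular_rep g.
have [d [Hd Hmin]] := least_exists Hv0.
have lower : forall m, has_partial_degree g m -> d <= m.
  move=> m /lower_bound [v Hv le]; exact: leq_trans (Hmin _ Hv) le.
have [n [rho [Frho Ed]]] := Hd.
have tot : has_total_degree g d by rewrite Ed; apply: upper_bound.
exists d; split.
- by split.
- split.
    exists n, rho; split => // x y ne iso.
    have [v Hv lt] := remove_orbit g Frho ne iso.
    by move: (Hmin _ Hv); rewrite Ed leqNgt lt.
  move=> m [n' [rho' [F' _ Em]]]; apply: Hmin; by exists n', rho'.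
- split; first exact: total_partial. exact: lower.
- split=> // m /total_partial; exact: lower.
Qed.
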